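(* Let $\beta_1,\dots,\beta_T\in(0,1)$ be a variance schedule, $\alpha_t:=1-\beta_t$, $\bar\alpha_t:=\prod_{s=1}^t\alpha_s$, and $S(z_0,\varepsilon,t):=\sqrt{\bar\alpha_t}\,z_0+\sqrt{1-\bar\alpha_t}\,\varepsilon$. Let $\varepsilon_\theta(z_t,c_{\mathrm{text}},c_{\mathrm{img}})$ be a conditional noise-prediction network with generation function $G(z_t,c_{\mathrm{text}},c_{\mathrm{img}}):=[z_t-\sqrt{1-\bar\alpha_t}\,\varepsilon_\theta(z_t,c_{\mathrm{text}},c_{\mathrm{img}})]/\sqrt{\bar\alpha_t}$, and let $\varepsilon^*_\theta(z_t,c_{\mathrm{text}})$ be the noise-prediction network of a fixed pre-trained text-guided latent diffusion model. Let $P(z_0,c_{\mathrm{text}})$ be a likelihood function that image $z_0$ lies in the data distribution specified by text condition $c_{\mathrm{text}}$, and assume (domain smoothness) that for every text condition $P(\cdot,c_{\mathrm{text}})$ is $L$-Lipschitz for some $L<\infty$: $|P(z^1_0,c_{\mathrm{text}})-P(z^2_0,c_{\mathrm{text}})|\le L\|z^1_0-z^2_0\|_2$. Let $c_y$ be the target text condition, $x_0$ a source image, $\varepsilon_x\sim\mathcal N(0,\mathbf I)$, and $x_t=S(x_0,\varepsilon_x,t)$. Define $$\mathcal L_{\mathrm{LDM}}=-\mathbb E_{x_0,\varepsilon_x}\,P\big[G(S(x_0,\varepsilon_x,t),c_y,x_0),c_y\big].$$ Then $$\mathcal L_{\mathrm{LDM}}\le \mathcal L_{\mathrm{self}}:=\mathbb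 E_{x_0,\varepsilon_x}\Big[L\sqrt{\tfrac{1-\bar\alpha_t}{\bar\alpha_t}}\,\big\|\varepsilon_\theta(x_t,c_y,x_0)-\varepsilon^*_\theta(x_t,c_y)\big\|_2\Big]+\mathrm{const},$$ where $\mathrm{const}$ is a quantity not depending on the network $\varepsilon_\theta$ (it depends only on the pre-trained model and $P$).
   Context: Setting: latent diffusion models for unpaired image-to-image translation from a source domain $\mathcal X$ to a target domain $\mathcal Y$ specified by the text condition $c_y$; the time-step dependence of the networks is suppressed in notation. *)

(* Defs.v *)
From HB Require Import structures.
From mathcomp Require Import all_boot all_order all_algebra.
From mathcomp Require Import all_classical all_reals all_analysis.
From mathcomp Require Import normal_distribution.
Set Implicit Arguments. Unset Strict Implicit. Unset Printing Implicit Defensive.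
Import Order.TTheory GRing.Theory Num.Theory.
Local Open Scope ring_scope.
Local Open Scope classical_set_scope.

Definition l2norm {R : realType} {n : nat} (v : 'rV[R]_n) : R :=
  Num.sqrt (\sum_(i < n) (v ord0 i) ^+ 2).

Definition alphabar {R : realType} (beta : nat -> R) (t : nat) : R :=
  \prod_(1 <= s < t.+1) (1 - beta s).

Definition Sfwd {R : realType} {n : nat} (beta : nat -> R)
    (z0 eps : 'rV[R]_n) (t : nat) : 'rV[R]_n :=
  Num.sqrt (alphabar beta t) *: z0 + Num.sqrt (1 - alphabar beta t) *: eps.

Definition denoise {R : realType} {n : nat} (beta : nat -> R) (t : nat)
    (zt e : 'rV[R]_n) : 'rV[R]_n :=
  (Num.sqrt (alphabar beta t))^-1 *: (zt - Num.sqrt (1 - alphabar beta t) *: e).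

(* generation function G(z_t, c_text, c_img) of the conditional network eps_theta
   (time-step dependence suppressed, t fixed) *)
Definition Ggen {R : realType} {n : nat} {Ctext : Type} (beta : nat -> R) (t : nat)
    (eps_theta : 'rV[R]_n -> Ctext -> 'rV[R]_n -> 'rV[R]_n)
    (zt : 'rV[R]_n) (ctext : Ctext) (cimg : 'rV[R]_n) : 'rV[R]_n :=
  denoise beta t zt (eps_theta zt ctext cimg).

(* The joint law of (x0, eps_x) under Pr: eps_x ~ N(0, I) (iid standard normal
   coordinates) and eps_x independent of x0.  Stated on measurable boxes, which
   form a pi-system generating the Borel sets of R^n x R^n. *)
Definition std_gaussian_indep {d} {Omega : measurableType d} {R : realType} {n : nat}
    (Pr : probability Omega R) (x0 epsx : Omega -> 'rV[R]_n) : Prop :=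
  (forall i, measurable_fun setT (fun w => x0 w ord0 i)) /\
  (forall i, measurable_fun setT (fun w => epsx w ord0 i)) /\
  forall (B A : 'I_n -> set R),
    (forall i, measurable (B i)) -> (forall i, measurable (A i)) ->
    Pr [set w | forall i, B i (x0 w ord0 i) /\ A i (epsx w ord0 i)] =
    (Pr [set w | forall i, B i (x0 w ord0 i)] *
       \prod_(i < n) normal_prob 0 1 (A i))%E.

(* Main.v *)
Require Import Defs.
From HB Require Import structures.
From mathcomp Require Import all_boot all_order all_algebra.
From mathcomp Require Import all_classical all_reals all_analysis.
From mathcomp Require Import normal_distribution.
From mathcomp Require Import measurable_realfun lebesgue_integral.
From mathcomp Require Import lra.
Import Order.TTheory GRing.Theory Num.Theory.
Local Open Scope ring_scope.
Local Open Scope classical_set_scope.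
Local Open Scope ereal_scope.

Lemma my_le_integral d (T : measurableType d) (R : realType)
  (mu : {measure set T -> \bar R}) (f g : T -> \bar R) :
  measurable_fun setT f -> measurable_fun setT g ->
  (forall x, f x <= g x) -> \int[mu]_x f x <= \int[mu]_x g x.
Proof.
move=> mf mg fg; rewrite integralE [leRHS]integralE leeB//.
- apply: ge0_le_integral => //.
  + exact: measurable_funepos.
  + exact: measurable_funepos.
  + move=> x _; apply: (funepos_le (D:=setT)); [by move=> y _; exact: fg | by rewrite in_setT].
- apply: ge0_le_integral => //.
  + exact: measurable_funeneg.
  + exact: measurable_funeneg.
  + move=> x _; apply: (funeneg_le (D:=setT)); [by move=> y _; exact: fg | by rewrite in_setT].
Qed.

Local Close Scope ereal_scope.

Lemma l2normZ (R : realType) (n : nat) (c : R) (v : 'rV[R]_n) :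
  l2norm (c *: v) = `|c| * l2norm v.
Proof.
rewrite /l2norm.
under eq_bigr => i _ do rewrite mxE exprMn.
by rewrite -mulr_sumr sqrtrM ?sqr_ge0// sqrtr_sqr.
Qed.

Lemma sqrt_ratio (R : realType) (a : R) :
  (Num.sqrt a)^-1 * Num.sqrt (1 - a) = Num.sqrt ((1 - a) / a).
Proof.
have [h|h] := lerP 0 (1 - a).
  rewrite sqrtrM// mulrC.
  have [ha|ha] := lerP 0 a; first by rewrite sqrtrV.
  by rewrite (ltr0_sqrtr ha) invr0 (@ltr0_sqrtr _ a^-1) ?mulr0 ?mul0r ?invr_lt0.
rewrite (@ltr0_sqrtr _ (1-a))// mulr0 (@ltr0_sqrtr _ ((1-a)/a))// pmulr_llt0// invr_gt0; lra.
Qed.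

Theorem proposition2
  (R : realType) (n : nat) (Ctext : Type)
  (T : nat) (beta : nat -> R)
  (hbeta : forall s, (1 <= s <= T)%N -> 0 < beta s < 1)
  (t : nat) (ht : (1 <= t <= T)%N)
  (eps_star : 'rV[R]_n -> Ctext -> 'rV[R]_n)
  (P : 'rV[R]_n -> Ctext -> R) (L : R)
  (hP : forall c z1 z2, `|P z1 c - P z2 c| <= L * l2norm (z1 - z2))
  (c_y : Ctext)
  (d : measure_display) (Omega : measurableType d) (Pr : probability Omega R)
  (x0 epsx : Omega -> 'rV[R]_n)
  (hlaw : std_gaussian_indep Pr x0 epsx)
  (hconst : Pr.-integrable setT (fun w =>
     (P (denoise beta t (Sfwd beta (x0 w) (epsx w) t)
           (eps_star (Sfwd beta (x0 w) (epsx w) t) c_y)) c_y)%:E)) :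
  exists C : R,
    forall eps_theta : 'rV[R]_n -> Ctext -> 'rV[R]_n -> 'rV[R]_n,
      measurable_fun setT (fun w =>
        P (Ggen beta t eps_theta (Sfwd beta (x0 w) (epsx w) t) c_y (x0 w)) c_y) ->
      measurable_fun setT (fun w =>
        l2norm (eps_theta (Sfwd beta (x0 w) (epsx w) t) c_y (x0 w)
                - eps_star (Sfwd beta (x0 w) (epsx w) t) c_y)) ->
      (- (\int[Pr]_w
           (P (Ggen beta t eps_theta (Sfwd beta (x0 w) (epsx w) t) c_y (x0 w)) c_y)%:E)
       <= \int[Pr]_w
           (L * Num.sqrt ((1 - alphabar beta t) / alphabar beta t)
              * l2norm (eps_theta (Sfwd beta (x0 w) (epsx w) t) c_y (x0 w)
                        - eps_star (Sfwd beta (x0 w) (epsx w) t) c_y))%:E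
          + C%:E)%E.
Proof.
set h := fun w => P (denoise beta t (Sfwd beta (x0 w) (epsx w) t)
           (eps_star (Sfwd beta (x0 w) (epsx w) t) c_y)) c_y.
have hfin := integrable_fin_num measurableT hconst.
exists (- fine (\int[Pr]_w (h w)%:E)) => eps_theta mf mN.
set f := fun w => P (Ggen beta t eps_theta (Sfwd beta (x0 w) (epsx w) t) c_y (x0 w)) c_y.
set k := Num.sqrt ((1 - alphabar beta t) / alphabar beta t).
set N := fun w => l2norm (eps_theta (Sfwd beta (x0 w) (epsx w) t) c_y (x0 w)
                        - eps_star (Sfwd beta (x0 w) (epsx w) t) c_y).
set g := fun w => L * k * N w.
rewrite -/(f _) -/(g _).
have pw : forall w, `|h w - f w| <= g w.
  move=> w; apply: le_trans (hP _ _ _) _.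
  rewrite (_ : l2norm _ = k * N w); first by rewrite /g mulrA.
 rewrite -scalerBr.
  set zt := Sfwd _ _ _ _.
  rewrite (_ : (zt - _ *: _) - (zt - _ *: _) =
     Num.sqrt (1 - alphabar beta t) *: (eps_theta zt c_y (x0 w) - eps_star zt c_y)); last first.
    by rewrite scalerBr opprB addrC addrA subrK.
  rewrite scalerA l2normZ normrM !ger0_norm ?sqrtr_ge0 ?invr_ge0 ?sqrtr_ge0//.
  by rewrite sqrt_ratio.
have g0 : forall w, 0 <= g w by move=> w; exact: le_trans (normr_ge0 _) (pw w).
have mg : measurable_fun setT g.
  by apply: measurable_funM => //; exact: measurable_cst.
have [ginf|gfin] := eqVneq (\int[Pr]_w (g w)%:E)%E +oo%E.
  by rewrite ginf addye// leey.
have gint : Pr.-integrable setT (fun w => (g w)%:E).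
  apply/integrableP; split; first exact/measurable_EFinP.
  under eq_integral => x _ do rewrite gee0_abs ?lee_fin ?g0//.
  by rewrite ltey.
have Gf := integrable_fin_num measurableT gint.
have mh : measurable_fun setT h.
  by move/integrableP: hconst => [/measurable_EFinP].
have := @my_le_integral _ _ _ Pr (fun w => (h w - g w)%:E) (fun w => (f w)%:E).
move/(_ _ _ _) => H.
have {H} : (\int[Pr]_w ((h w)%:E - (g w)%:E) <= \int[Pr]_w (f w)%:E)%E.
  under eq_integral => x _ do rewrite -EFinB.
  apply: H.
  - by apply/measurable_EFinP; apply: measurable_funB.
  - exact/measurable_EFinP.
  - move=> w; rewrite lee_fin; move/ler_normlP: (pw w) => [] ; lra.
rewrite integralB_EFin//.
move: Gf hfin.
case: (\int[Pr]_w (f w)%:E)%E => [a||]; case: (\int[Pr]_w (g w)%:E)%E => [G||];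
  case: (\int[Pr]_w (h w)%:E)%E => [H||] //= _ _; rewrite ?lee_fin ?leey //.

- lra.
- by rewrite leNye.
Qed.
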